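(* Let $d\ge 1$, let $\Delta$ be a simplicial complex containing a $d$-dimensional cycle $\Omega$ whose $d$-faces are $F_1,\ldots,F_k$. Suppose there exist distinct $(d+1)$-faces $A_1,\ldots,A_\ell$ of the induced subcomplex $\Delta_{V(\Omega)}$ such that, over $\mathbb{Z}_2$, $$\partial_{d+1}\Big(\sum_{i=1}^\ell A_i\Big)=\sum_{j=1}^k F_j, \qquad ( * )$$ and no proper subset of $\{A_1,\ldots,A_\ell\}$ satisfies $( * )$. Then for any vertex $v\notin V(\Omega)$, the simplicial complex $\Phi=\langle F_1\cup\{v\},\ldots,F_k\cup\{v\},A_1,\ldots,A_\ell\rangle$ is a $(d+1)$-dimensional cycle.
   Context: A simplicial complex is a family of subsets (faces) of a finite vertex set closed under taking subsets; the dimension of a face $S$ is $|S|-1$, a $d$-face is a face of dimension $d$, facets are maximal faces, and $\langle G_1,\ldots,G_m\rangle$ denotes the simplicial complex whose facets are $G_1,\ldots,G_m$. $V(\Omega)$ is the vertex set of $\Omega$; for $W\subseteq V(\Delta)$, the induced subcomplex $\Delta_W$ consists of the faces of $\Delta$ contained in $W$. Over $\mathbb{Z}_2$, $C_d$ is the vector space with basis the $d$-faces and $\partial_d(F)$ is the sum of the $(d-1)$-faces contained in $F$. A complex is pure if all facets have the same dimension. A sequence $G_1,\ldots,G_m$ of $d$-faces is a $d$-path if $|G_i\cap G_{i+1}|=d$ for $1\le i\le m-1$. A pure $d$-dimensional complex is $d$-path-connected if every pair of its $d$-faces is joined by a $d$-path; its $d$-path-connected components are its maximal $d$-path-connected subcomplexes.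 A $d$-dimensional cycle is a pure $d$-dimensional simplicial complex $\Omega$ that is $d$-path-connected and in which every $(d-1)$-face of $\Omega$ is contained in an even number of $d$-faces of $\Omega$. *)

(* Defs.v *)
(* Vertices range over a finite type T; a family of faces is
   a {set {set T}}; Z_2-chains are represented by sets of faces (sum = symmetric
   difference), so a Z_2 d-chain is a set of d-faces. *)
From mathcomp Require Import all_boot all_order.
Set Implicit Arguments. Unset Strict Implicit. Unset Printing Implicit Defensive.

Section SC.
Variable T : finType.

Definition is_complex (D : {set {set T}}) : Prop :=
  forall F S : {set T}, F \in D -> S \subset F -> S \in D.

Definition vertices (D : {set {set T}}) : {set T} := \bigcup_(F in D) F.

Definition induced (D : {set {set T}}) (W : {set T}) : {set {set T}} :=
  [set F in D | F \subset W].

Definition dfaces (D : {set {set T}}) (d : nat) : {set {set T}} :=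
  [set F in D | #|F| == d.+1].

Definition is_facet (D : {set {set T}}) (F : {set T}) : Prop :=
  F \in D /\ forall G, G \in D -> F \subset G -> G = F.

Definition pure_dim (D : {set {set T}}) (d : nat) : Prop :=
  (exists F, F \in D) /\ forall F, is_facet D F -> #|F| = d.+1.

Definition dadj (d : nat) : rel {set T} := fun G H => #|G :&: H| == d.

Definition is_dpath (D : {set {set T}}) (d : nat) (G : {set T}) (s : seq {set T}) :=
  all (fun F => F \in dfaces D d) (G :: s) && path (dadj d) G s.

Definition dpath_connected (D : {set {set T}}) (d : nat) : Prop :=
  forall G H, G \in dfaces D d -> H \in dfaces D d ->
    exists s, is_dpath D d G s /\ last G s = H.

Definition is_cycle (D : {set {set T}}) (d : nat) : Prop :=
  [/\ is_complex D, pure_dim D d, dpath_connected D d &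
      forall S, S \in D -> #|S| = d ->
        ~~ odd #|[set F in dfaces D d | S \subset F]| ].

Definition bdry (d : nat) (As : {set {set T}}) : {set {set T}} :=
  [set G : {set T} | (#|G| == d.+1) && odd #|[set A in As | G \subset A]|].

Definition generated (Gs : {set {set T}}) : {set {set T}} :=
  [set S : {set T} | [exists G in Gs, S \subset G]].

End SC.

(* Main.v *)
Require Import Defs.
From mathcomp Require Import all_boot all_order zify.
Set Implicit Arguments. Unset Strict Implicit. Unset Printing Implicit Defensive.

Section Gen.
Variable T : finType.
Implicit Types (D Gs : {set {set T}}) (F G S : {set T}).

Lemma gen_complex Gs : is_complex (generated Gs).
Proof.
move=> F S; rewrite !inE => /existsP [G /andP [GG FG]] SF.
by apply/existsP; exists G; rewrite GG (subset_trans SF FG).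
Qed.

Lemma in_gen Gs G : G \in Gs -> G \in generated Gs.
Proof. by move=> GG; rewrite inE; apply/existsP; exists G; rewrite GG subxx. Qed.

Lemma gen_sub Gs S : S \in generated Gs -> exists2 G, G \in Gs & S \subset G.
Proof. by rewrite inE => /existsP [G /andP [GG SG]]; exists G. Qed.

Lemma gen_card Gs n S : (forall G, G \in Gs -> #|G| = n) ->
  S \in generated Gs -> #|S| = n -> S \in Gs.
Proof.
move=> HG /gen_sub [G GG SG] cS.
have -> : S = G by apply/eqP; rewrite eqEcard SG cS (HG _ GG) leqnn.
done.
Qed.

Lemma facet_exists_aux D n F : #|T| - #|F| <= n -> F \in D ->
  exists G, is_facet D G /\ F \subset G.
Proof.
elim: n F => [|n IH] F Hn FD.
- exists F; split; last exact: subxx.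
  split=> // G GD FG; apply/eqP; rewrite eq_sym eqEcard FG.
  rewrite /=; have := max_card G; move: Hn; lia.
- case: (boolP [exists G in D, F \proper G]) => [/existsP [G /andP [GD FG]]|].
  + have [|H [fH GH]] := IH G _ GD.
      have := proper_card FG; have := max_card G.
      move: Hn; lia.
    by exists H; split=> //; apply: subset_trans GH; exact: proper_sub.
  + move/existsPn=> H; exists F; split; last exact: subxx.
    split=> // G GD FG; have := H G; rewrite GD /= properEneq FG andbT negbK.
    by move/eqP.
Qed.

Lemma facet_exists D F : F \in D -> exists G, is_facet D G /\ F \subset G.
Proof. exact: (@facet_exists_aux D #|T|) (leq_subr _ _). Qed.

Lemma pure_dface D d : pure_dim D d -> exists F, F \in dfaces D d.
Proof.
case=> [[F FD] Hf]; have [G [fG _]] := facet_exists FD.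
by exists G; rewrite inE (Hf _ fG) eqxx andbT; case: fG.
Qed.

End Gen.
Section Main.
Variables (T : finType) (d : nat) (Delta Omega As : {set {set T}}) (v : T).
Hypotheses (cycO : is_cycle Omega d)
  (AsD : As \subset dfaces (induced Delta (vertices Omega)) d.+1)
  (bdA : bdry d As = dfaces Omega d)
  (minA : forall Bs : {set {set T}}, Bs \proper As -> bdry d Bs != dfaces Omega d)
  (vO : v \notin vertices Omega).

Local Notation Cs := [set v |: F | F in dfaces Omega d].
Local Notation Gs := (Cs :|: As).

Lemma vF F : F \in Omega -> v \notin F.
Proof. by move=> FO; apply: contra vO; apply/subsetP/bigcup_sup. Qed.

Lemma AsP A : A \in As -> [/\ #|A| = d.+2, A \subset vertices Omega & v \notin A].
Proof.
move=> AA; have := subsetP AsD _ AA; rewrite !inE => /andP [/andP [_ AV] /eqP cA].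
by split=> //; apply: contra vO; exact: (subsetP AV).
Qed.

Lemma dfO F : F \in dfaces Omega d -> F \in Omega /\ #|F| = d.+1.
Proof. by rewrite inE => /andP [FO /eqP]. Qed.

Lemma cardC F : F \in dfaces Omega d -> #|v |: F| = d.+2.
Proof. by case/dfO=> FO cF; rewrite cardsU1 (vF FO) cF. Qed.

Lemma GsCard G : G \in Gs -> #|G| = d.+2.
Proof.
rewrite inE => /orP [/imsetP [F FO ->]|/AsP []//]; exact: cardC.
Qed.

Lemma dfPhi : dfaces (generated Gs) d.+1 = Gs.
Proof.
apply/setP=> S; rewrite inE; apply/andP/idP => [[SP /eqP cS]|SG].
  exact: gen_card GsCard SP cS.
by rewrite in_gen // GsCard.
Qed.


Lemma vCs C : C \in Cs -> v \in C.
Proof. by case/imsetP=> F _ ->; rewrite setU11. Qed.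

Lemma splitX (S : {set T}) : #|[set F in Gs | S \subset F]| =
  #|[set F in Cs | S \subset F]| + #|[set F in As | S \subset F]|.
Proof.
rewrite -(cardsID Cs [set F in Gs | S \subset F]); congr (_ + _).
  apply: eq_card=> F; rewrite !inE; case: (boolP (F \in Cs)) => //= _; by rewrite ?andbT ?andbF.
apply: eq_card=> F; rewrite !inE; case: (boolP (F \in Cs)) => //= FC.
case: (boolP (F \in As)) => // FA; exfalso.
by have [_ _ /negP] := AsP FA; apply; exact: vCs.
Qed.

Lemma evenPhi (S : {set T}) : S \in generated Gs -> #|S| = d.+1 ->
  ~~ odd #|[set F in dfaces (generated Gs) d.+1 | S \subset F]|.
Proof.
move=> SP cS; rewrite dfPhi splitX.
have [compO _ _ evO] := cycO.
case: (boolP (v \in S)) => vS.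
- have -> : [set F in As | S \subset F] = set0.
    apply/setP=> F; rewrite !inE; apply/negP=> /andP [FA SF].
    by have [_ _ /negP] := AsP FA; apply; exact: (subsetP SF).
  rewrite cards0 addn0.
  have [G GG SG] := gen_sub SP.
  have [F0 F0O GF0] : exists2 F0, F0 \in dfaces Omega d & G = v |: F0.
    move: GG; rewrite inE => /orP [/imsetP [F0 ? ->]|GA]; first by exists F0.
    by have [_ _ /negP] := AsP GA; case; exact: (subsetP SG).
  have S'O : S :\ v \in Omega.
    apply: (compO F0); first by case/dfO: F0O.
    by rewrite subDset -GF0.
  have cS' : #|S :\ v| = d by move: cS; rewrite (cardsD1 v S) vS; case.
  have := evO _ S'O cS'.
  have -> : [set F in Cs | S \subset F] =
      [set v |: F | F in [set F in dfaces Omega d | S :\ v \subset F]].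
    apply/setP=> C; apply/idP/idP.
      rewrite inE => /andP [CC SC]; case/imsetP: CC => F FO EC.
      by rewrite EC; apply: imset_f; rewrite inE FO subDset -EC.
    case/imsetP=> F FP ->.
    have /andP [FO SF] : (F \in dfaces Omega d) && (S :\ v \subset F) by rewrite inE in FP.
    by rewrite inE imset_f //= -subDset.
  rewrite card_in_imset //.
  move=> F1 F2; rewrite !inE => /andP [/andP [F1O _] _] /andP [/andP [F2O _] _] E.
  by rewrite -(setU1K (vF F1O)) -(setU1K (vF F2O)) E.
- have Hc : [set F in Cs | S \subset F] =
      if S \in dfaces Omega d then [set v |: S] else set0.
    apply/setP=> C; rewrite !inE; apply/andP/idP.
      case=> /imsetP [F FO ->] SF.
      have SF' : S \subset F.
        apply/subsetP=> x xS; have := subsetP SF x xS; rewrite !inE.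
        by case/orP=> // /eqP xv; rewrite -xv xS in vS.
      have ESF : S = F.
        by apply/eqP; rewrite eqEcard SF' cS; case/dfO: (FO) => _ ->; rewrite ltnSn.
      by rewrite -ESF in FO *; move: FO; rewrite inE => ->; rewrite inE.
    case: ifP => SO; last by rewrite inE.
    rewrite inE => /eqP ->; split; first by apply: imset_f; rewrite inE SO.
    exact: subsetUr.
  have HA : odd #|[set F in As | S \subset F]| = (S \in dfaces Omega d).
    by rewrite -bdA inE cS eqxx.
  rewrite oddD HA Hc; case: ifP => _; by rewrite ?cards1 ?cards0.
Qed.

Definition ee : rel {set T} :=
  fun G H => [&& G \in Gs, H \in Gs & dadj d.+1 G H].

Lemma ee_sym : symmetric ee.
Proof. by move=> G H; rewrite /ee /dadj setIC; case: (G \in Gs); case: (H \in Gs). Qed.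

Lemma conn_sym G H : connect ee G H = connect ee H G.
Proof. exact: (sym_connect_sym ee_sym). Qed.

Lemma all_ee G s : path ee G s -> all (fun F => F \in Gs) s.
Proof.
elim: s G => [|H s IH] G //=.
by case/andP=> /and3P [_ -> _] /IH.
Qed.

Lemma path_ee G s : G \in Gs -> path ee G s -> is_dpath (generated Gs) d.+1 G s.
Proof.
move=> GG ps; rewrite /is_dpath dfPhi.
apply/andP; split; first by rewrite /= GG (all_ee ps).
by apply: sub_path ps => x y /and3P [].
Qed.

Lemma cone_in F : F \in dfaces Omega d -> v |: F \in Gs.
Proof. by move=> FO; rewrite inE imset_f. Qed.

Lemma conn_cones F G : F \in dfaces Omega d -> G \in dfaces Omega d ->
  connect ee (v |: F) (v |: G).
Proof.
have [_ _ pcO _] := cycO.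
move=> FO GO; have [s [ps <-]] := pcO F G FO GO.
elim: s F FO ps => [|H s IH] F FO ps /=; first exact: connect0.
move: ps; rewrite /is_dpath /= => /andP [/andP [_ /andP [HO als]] /andP [aFH ps]].
apply: connect_trans (IH H HO _); last by rewrite /is_dpath /= HO als.
apply: connect1; rewrite /ee !cone_in //= /dadj -setUIr cardsU1.
have vnF := vF (proj1 (dfO FO)).
by rewrite inE negb_and vnF /=; move: aFH => /eqP ->.
Qed.

Lemma adjA (A A' G : {set T}) : A \in As -> A' \in As -> A != A' -> G \subset A ->
  G \subset A' -> #|G| = d.+1 -> #|A :&: A'| = d.+1.
Proof.
move=> AA AA' nAA GA GA' cG.
have [cA _ _] := AsP AA; have [cA' _ _] := AsP AA'.
have h1 : d.+1 <= #|A :&: A'| by rewrite -cG subset_leq_card // subsetI GA GA'.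
have h2 : #|A :&: A'| <= #|A| by rewrite subset_leq_card // subsetIl.
case: (ltnP d.+1 #|A :&: A'|) => h3; last by apply/eqP; rewrite eqn_leq h1 h3.
have E1 : A :&: A' = A by apply/eqP; rewrite eqEcard subsetIl cA.
have E2 : A :&: A' = A' by apply/eqP; rewrite eqEcard subsetIr cA'.
by move: nAA; rewrite -E1 E2 eqxx.
Qed.

Lemma conn_A (A : {set T}) : A \in As -> [exists C in Cs, connect ee A C].
Proof.
move=> AA; case: (boolP [exists C in Cs, connect ee A C]) => // nA; exfalso.
set B := [set A in As | ~~ [exists C in Cs, connect ee A C]].
have A0B : A \in B by rewrite inE AA nA.
have prop : As :\: B \proper As.
  rewrite properEneq subsetDl andbT; apply/eqP=> E.
  by move: AA; rewrite -E inE A0B.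
apply: (negP (minA prop)); apply/eqP; rewrite -bdA.
apply/setP=> G; rewrite !inE; case: (boolP (#|G| == d.+1)) => //= /eqP cG.
set X := [set A in As | G \subset A].
have -> : [set A in As :\: B | G \subset A] = X :\: B.
  by apply/setP=> A'; rewrite !inE andbA.
rewrite -(cardsID B X) oddD.
suff -> : odd #|X :&: B| = false by [].
case: (set_0Vmem (X :&: B)) => [->|[A0]]; first by rewrite cards0.
rewrite !inE => /andP [/andP [A0A GA0] /andP [_ nA0]].
have XB : X :&: B = X.
  apply/setIidPl/subsetP=> A'; rewrite !inE => /andP [A'A GA'].
  rewrite A'A /=; apply: contra nA0 => /existsP [C /andP [CC cA'C]].
  apply/existsP; exists C; rewrite CC /=.
  case: (eqVneq A0 A') => [->//|ne].
  apply: connect_trans cA'C; apply: connect1.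
  by rewrite /ee !inE A0A A'A !orbT /dadj (adjA A0A A'A ne GA0 GA' cG) eqxx.
rewrite XB.
have : odd #|X| = (G \in bdry d As) by rewrite inE cG eqxx.
rewrite bdA => ->; apply/negP => GO.
move: nA0; apply/negP; rewrite negbK; apply/existsP; exists (v |: G).
rewrite imset_f //=; apply: connect1.
have [_ _ vA0] := AsP A0A.
rewrite /ee cone_in // inE A0A orbT /= /dadj.
have -> : A0 :&: (v |: G) = G.
  apply/setP=> x; rewrite !inE; case: (eqVneq x v) => [->|] /=.
    by rewrite (negbTE vA0) (negbTE (vF (proj1 (dfO GO)))).
  by move=> _; case: (boolP (x \in G)) => xG; rewrite ?andbT ?andbF ?(subsetP GA0).
by rewrite cG.
Qed.


Lemma mainSec : is_cycle (generated Gs) d.+1.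
Proof.
have [compO pO _ _] := cycO.
have [F0 F0O] := pure_dface pO.
have connC0 : forall G, G \in Gs -> connect ee G (v |: F0).
  move=> G; rewrite inE => /orP [/imsetP [F FO ->]|GA]; first exact: conn_cones.
  have /existsP [C /andP [/imsetP [F FO ->] cAC]] := conn_A GA.
  exact: connect_trans cAC (conn_cones FO F0O).
split.
- exact: gen_complex.
- split; first by exists (v |: F0); apply: in_gen; apply: cone_in.
  move=> F [FP Fmax]; have [G GG FG] := gen_sub FP.
  rewrite -(Fmax G (in_gen GG) FG); exact: GsCard.
- move=> G H; rewrite dfPhi => GG HG.
  have : connect ee G H.
    by apply: connect_trans (connC0 _ GG) _; rewrite conn_sym; exact: connC0.
  case/connectP=> p pp ->; exists p; split=> //; exact: path_ee.
- exact: evenPhi.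
Qed.

End Main.

Theorem mainTheorem4 (T : finType) (d : nat) (Delta Omega As : {set {set T}})
    (v : T) :
  1 <= d ->
  is_complex Delta ->
  is_cycle Omega d ->
  Omega \subset Delta ->
  (* A_1..A_l : distinct (d+1)-faces of the induced subcomplex Delta_{V(Omega)} *)
  As \subset dfaces (induced Delta (vertices Omega)) d.+1 ->
  (* ( * ) : boundary of A_1+...+A_l equals F_1+...+F_k over Z_2 *)
  bdry d As = dfaces Omega d ->
  (* no proper subset satisfies ( * ) *)
  (forall Bs : {set {set T}}, Bs \proper As -> bdry d Bs != dfaces Omega d) ->
  v \in vertices Delta ->
  v \notin vertices Omega ->
  is_cycle (generated ([set v |: F | F in dfaces Omega d] :|: As)) d.+1.
Proof.
move=> _ _ cyc _ AsD bd mn _ vO.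
by eapply mainSec; eassumption.
Qed.
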